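(* Let $\Gamma=(V,E,\ell)$ be a connected finite labeled simplicial graph with all labels even whose Artin group is of FC-type, let $\mathbb{K}$ be a field of characteristic $0$, and let $\chi:A_\Gamma\to\mathbb{Z}$ be a surjective non-resonant homomorphism. Then: (a) every $1$-acyclic pair $(\bar X,\bar Y)$ of order $r=|V|-s$ is of the form: $\bar X$ is the set of edges of a spanning $s$-forest $F_s=T_1\cup\dots\cup T_s$ of $\Gamma$ and $\bar Y^c=V\setminus\bar Y=\{v_1,\dots,v_s\}$ with $v_i\in V_{T_i}$, i.e. $(F_s,\bar v)$ is a rooted spanning $s$-forest; (b) if $(F_s,\bar v)$, $\bar v=(v_1,\dots,v_s)$, is a rooted spanning $s$-forest, $(F'_{s+1},\bar v')$ is obtained by deleting one edge $e$ of $F_s$ and taking $\bar v'=(v_1,\dots,v_s,v_{s+1})$ with $v_{s+1}$ a vertex of the newly created tree not containing any of $v_1,\dots,v_s$, and $(\bar X,\bar Y)$, $(\bar X',\bar Y')$ are the corresponding $1$-acyclic pairs, then for any $d\ge1$ and any root $\zeta_d$ of $\Phi_d(t)$, the multiplicities $m$ and $m'$ of $\zeta_d$ as a root of $\mathfrak{m}^\chi_{(\bar X,\bar Y)}$ and of $\mathfrak{m}^\chi_{(\bar X',\bar Y')}$ respectively satisfy $m\le m'+2$.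
   Context: $\Gamma$ has labels $\ell(e)=2\tilde\ell(e)$, $\tilde\ell(e)\ge1$; $A_\Gamma=\langle g_v\ (v\in V)\mid (g_vg_w)^{\tilde\ell(e)}=(g_wg_v)^{\tilde\ell(e)},\ e=\{v,w\}\in E\rangle$; FC-type means that for every clique $X$ the Coxeter group on $g_v$ ($v\in X$) with $g_v^2=1$, $(g_vg_w)^{\ell(\{v,w\})}=1$ is finite. $m_v=\chi(g_v)$; non-resonant means $m_v\ne0$ for all $v\in V$. $\Phi_d(t)$ is the $d$-th cyclotomic polynomial; $q_n(x)=(x^n-1)/(x-1)$. Fix a total order on $V$. The equivariant complex in degrees $1,0$: $C^\chi_1$ is free over $\mathbb{K}[t^{\pm1}]$ on $\sigma^\chi_e$, $e\in E$, $C^\chi_0$ free on $\sigma^\chi_v$, $v\in V$, and for $e=\{v<w\}$, $\partial^\chi_1\sigma^\chi_e=\big[(t^{m_v}-1)\sigma^\chi_w-(t^{m_w}-1)\sigma^\chi_v\big]q_{\tilde\ell(e)}(t^{m_v+m_w})$. $M^\chi_1(t)$ is its matrix; for a list $\bar X$ of $r$ distinct edges and $\bar Y$ of $r$ distinct vertices, $\mathfrak{m}^\chi_{(\bar X,\bar Y)}$ is the corresponding $r\times r$ minor of $M^\chi_1(t)$ (defined up to sign). $(\bar X,\bar Y)$ is $1$-acyclic of order $r$ if $|\bar X|=|\bar Y|=r$ and $H_*(N(\bar X),N(\bar Y^c);\mathbb{K})=0$, where $N(\bar X)$ is the graph with vertex set $V$ and edge set $\bar X$, and $N(\bar Y^c)$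 is its subcomplex consisting of the empty simplex and the vertices not in $\bar Y$ (homology of the augmented chain complexes). A spanning $s$-forest is a subgraph $F_s=T_1\sqcup\dots\sqcup T_s$ of $\Gamma$ which is a disjoint union of $s$ trees (a tree may be a single vertex) with $\bigcup_iV_{T_i}=V$; a rooted spanning $s$-forest is such an $F_s$ together with $\bar v=(v_1,\dots,v_s)$, $v_i\in V_{T_i}$. *)

(* Defs.v *)
From HB Require Import structures.
From mathcomp Require Import all_boot all_order all_algebra.
From mathcomp Require Import cyclotomic.
Set Implicit Arguments. Unset Strict Implicit. Unset Printing Implicit Defensive.
Import Order.TTheory GRing.Theory Num.Theory.
Local Open Scope ring_scope.

(* The vertex set is V = 'I_n, whose natural
   order is the fixed total order on V.  The graph is an irreflexive,
   symmetric relation [adj]; [lab v w] is tilde-ell({v,w}) (so that the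
   Artin/Coxeter label is ell = 2 * lab), meaningful on edges only.      *)

Definition simple_graph (n : nat) (adj : rel 'I_n) : Prop :=
  irreflexive adj /\ symmetric adj.

Definition even_labeling (n : nat) (adj : rel 'I_n) (lab : 'I_n -> 'I_n -> nat)
  : Prop :=
  forall v w, adj v w -> (lab v w = lab w v /\ (1 <= lab v w)%N).

Definition connected_graph (n : nat) (adj : rel 'I_n) : Prop :=
  forall v w : 'I_n, connect adj v w.

(* An (oriented) edge e = {v < w} is stored as the pair (v, w). *)
Definition is_edge (n : nat) (adj : rel 'I_n) (e : 'I_n * 'I_n) : bool :=
  (e.1 < e.2)%N && adj e.1 e.2.

(* The Coxeter group W_X on generators g_v (v in X) with relations
   g_v^2 = 1 and (g_v g_w)^(ell{v,w}) = 1 is presented as words over X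
   modulo the congruence generated by the relators (since generators are
   involutions the monoid presentation is the group presentation).       *)

Definition word_over (n : nat) (X : {set 'I_n}) (u : seq 'I_n) : bool :=
  all (fun v => v \in X) u.

Inductive cox_rel (n : nat) (lab : 'I_n -> 'I_n -> nat) (X : {set 'I_n})
  : seq 'I_n -> seq 'I_n -> Prop :=
| cox_sq v : v \in X -> cox_rel lab X [:: v; v] [::]
| cox_braid v w : v \in X -> w \in X -> v != w ->
    cox_rel lab X (flatten (nseq (2 * lab v w) [:: v; w])) [::].

Inductive cox_eq (n : nat) (lab : 'I_n -> 'I_n -> nat) (X : {set 'I_n})
  : seq 'I_n -> seq 'I_n -> Prop :=
| cox_refl u : cox_eq lab X u u
| cox_symm u w : cox_eq lab X u w -> cox_eq lab X w u
| cox_trans u w z : cox_eq lab X u w -> cox_eq lab X w z -> cox_eq lab X u z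
| cox_ctx a b u w : cox_rel lab X u w ->
    cox_eq lab X (a ++ u ++ b) (a ++ w ++ b).

Definition coxeter_finite (n : nat) (lab : 'I_n -> 'I_n -> nat)
  (X : {set 'I_n}) : Prop :=
  exists S : seq (seq 'I_n),
    forall u, word_over X u -> exists2 w, w \in S & cox_eq lab X u w.

Definition is_clique (n : nat) (adj : rel 'I_n) (X : {set 'I_n}) : Prop :=
  forall v w, v \in X -> w \in X -> v != w -> adj v w.

Definition FC_type (n : nat) (adj : rel 'I_n) (lab : 'I_n -> 'I_n -> nat)
  : Prop :=
  forall X : {set 'I_n}, is_clique adj X -> coxeter_finite lab X.

(* By the universal property of the
   presentation, homomorphisms A_Gamma -> Z are exactly assignments
   m : V -> Z of the generators (all relators map to 0 in Z).  chi is
   surjective iff its image (the subgroup generated by the m_v) contains 1. *)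

Definition chi_surjective (n : nat) (m : 'I_n -> int) : Prop :=
  exists c : 'I_n -> int, \sum_(v < n) c v * m v = 1.

Definition non_resonant (n : nat) (m : 'I_n -> int) : Prop :=
  forall v, m v != 0.

(* The matrix M^chi_1(t) over K[t^{+-1}] (inside the fraction field of
   K[t]) and its minors.                                               *)

Section Laurent.
Variable K : fieldType.

Definition tL : {fraction {poly K}} := tofrac ('X : {poly K}).

Definition qn (k : nat) (x : {fraction {poly K}}) : {fraction {poly K}} :=
  \sum_(j < k) x ^+ j.

(* coefficient of sigma_u in d_1(sigma_e), e = (v, w) with v < w *)
Definition bd_entry (n : nat) (lab : 'I_n -> 'I_n -> nat) (m : 'I_n -> int)
  (e : 'I_n * 'I_n) (u : 'I_n) : {fraction {poly K}} :=
  let v := e.1 in let w := e.2 in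
  let q := qn (lab v w) (tL ^ (m v + m w)) in
  if u == w then (tL ^ m v - 1) * q
  else if u == v then - ((tL ^ m w - 1) * q)
  else 0.

Definition chi_minor (n : nat) (lab : 'I_n -> 'I_n -> nat) (m : 'I_n -> int)
  (r : nat) (X : 'I_r -> 'I_n * 'I_n) (Y : 'I_r -> 'I_n)
  : {fraction {poly K}} :=
  \det (\matrix_(i < r, j < r) bd_entry lab m (X i) (Y j)).

(* 1-acyclic pairs: H_*(N(X), N(Y^c); K) = 0.  The augmented relative
   chain complex is 0 -> K^X --d--> K^Y -> 0 (the empty simplex and the
   vertices outside Y lie in the subcomplex), with d(v,w) = w - v
   restricted to the Y-coordinates.  H_1 = ker d, H_0 = coker d.       *)

Definition rel_bd (n r : nat) (X : 'I_r -> 'I_n * 'I_n) (Y : 'I_r -> 'I_n)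
  : 'M[K]_(r, r) :=
  \matrix_(i < r, j < r)
     ((Y j == (X i).2)%:R - (Y j == (X i).1)%:R).

Definition one_acyclic (n : nat) (adj : rel 'I_n) (r : nat)
  (X : 'I_r -> 'I_n * 'I_n) (Y : 'I_r -> 'I_n) : Prop :=
  [/\ injective X, (forall i, is_edge adj (X i)), injective Y,
      (forall u : 'rV[K]_r, u *m rel_bd X Y = 0 -> u = 0)
    & (forall y : 'rV[K]_r, exists u, u *m rel_bd X Y = y)].

End Laurent.

Definition sub_adj (n : nat) (Es : {set 'I_n * 'I_n}) : rel 'I_n :=
  fun u w => ((u, w) \in Es) || ((w, u) \in Es).

Definition acyclic_graph (n : nat) (Es : {set 'I_n * 'I_n}) : Prop :=
  ~ exists c : seq 'I_n, [&& cycle (sub_adj Es) c, uniq c & (2 < size c)%N].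

Definition spanning_forest (n : nat) (adj : rel 'I_n) (s : nat)
  (Es : {set 'I_n * 'I_n}) : Prop :=
  [/\ {subset Es <= is_edge adj}, acyclic_graph Es
    & n_comp (sub_adj Es) (@predT 'I_n) = s].

Definition rooted_spanning_forest (n : nat) (adj : rel 'I_n) (s : nat)
  (Es : {set 'I_n * 'I_n}) (vs : 'I_s -> 'I_n) : Prop :=
  spanning_forest adj s Es /\
  (forall i j, connect (sub_adj Es) (vs i) (vs j) -> i = j).
Arguments rooted_spanning_forest {n} adj s Es vs.

(* Main.v *)
Require Import Defs.
From HB Require Import structures.
From mathcomp Require Import all_boot all_order all_algebra.
From mathcomp Require Import cyclotomic.
From mathcomp Require Import ring zify.
Set Implicit Arguments. Unset Strict Implicit. Unset Printing Implicit Defensive.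
Import Order.TTheory GRing.Theory Num.Theory.
Local Open Scope ring_scope.
Lemma rel_bd_unit (K : fieldType) n r (X : 'I_r -> 'I_n * 'I_n) Y :
  (forall y : 'rV[K]_r, exists u, u *m rel_bd K X Y = y) -> rel_bd K X Y \in unitmx.
Proof.
move=> H; rewrite -row_full_unit -sub1mx; apply/row_subP => i.
have [u Hu] := H (row i 1%:M); apply/submxP; by exists u.
Qed.

Definition extv (K : fieldType) n r (Y : 'I_r -> 'I_n) (x : 'cV[K]_r) (u : 'I_n) : K :=
  \sum_j (Y j == u)%:R * x j 0.

Lemma rel_bd_mul (K : fieldType) n r (X : 'I_r -> 'I_n * 'I_n) (Y : 'I_r -> 'I_n) (x : 'cV[K]_r) (i : 'I_r) :
  (rel_bd K X Y *m x) i 0 = extv Y x (X i).2 - extv Y x (X i).1 :> K.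
Proof.
rewrite mxE /extv -sumrB; apply: eq_bigr => j _; by rewrite mxE mulrBl.
Qed.

Lemma extv_in (K : fieldType) n r (Y : 'I_r -> 'I_n) (x : 'cV[K]_r) j :
  injective Y -> extv Y x (Y j) = x j 0.
Proof.
move=> HY; rewrite /extv (bigD1 j) //= eqxx mul1r big1 ?addr0 // => k Hk.
by rewrite (inj_eq HY) (negbTE Hk) mul0r.
Qed.

Lemma extv_out (K : fieldType) n r (Y : 'I_r -> 'I_n) (x : 'cV[K]_r) u :
  u \notin codom Y -> extv Y x u = 0.
Proof.
move=> Hu; rewrite /extv big1 // => k _.
case: eqP => [E|_]; last by rewrite mul0r.
by move: Hu; rewrite -E codom_f.
Qed.

Lemma connect_const (T : finType) (e : rel T) (R : Type) (g : T -> R) :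
  (forall u w, e u w -> g u = g w) -> forall u w, connect e u w -> g u = g w.
Proof.
move=> H u w /connectP [p Hp ->]; elim: p u Hp => //= v p IH u /andP[euv Hp].
by rewrite (H _ _ euv); apply: IH.
Qed.

Lemma sub_adj_sym n (Es : {set 'I_n * 'I_n}) : symmetric (sub_adj Es).
Proof. by move=> u w; rewrite /sub_adj orbC. Qed.

Lemma sub_adj_imset n r (X : 'I_r -> 'I_n * 'I_n) u w :
  sub_adj [set X i | i : 'I_r] u w ->
  exists i, X i = (u, w) \/ X i = (w, u).
Proof.
by rewrite /sub_adj => /orP[] /imsetP[i _ E]; exists i; [left|right].
Qed.
Lemma solve_bd (K : fieldType) n r (X : 'I_r -> 'I_n * 'I_n) (Y : 'I_r -> 'I_n)
  (t : 'I_r -> K) :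
  rel_bd K X Y \in unitmx ->
  exists x : 'cV[K]_r, forall i, extv Y x (X i).2 - extv Y x (X i).1 = t i.
Proof.
move=> HU; exists (invmx (rel_bd K X Y) *m \col_i t i) => i.
by rewrite -rel_bd_mul mulKVmx // mxE.
Qed.

Lemma claimA (K : fieldType) n r (X : 'I_r -> 'I_n * 'I_n) (Y : 'I_r -> 'I_n) :
  rel_bd K X Y \in unitmx -> injective Y ->
  forall u, exists2 w, connect (sub_adj [set X i | i : 'I_r]) u w & w \notin codom Y.
Proof.
move=> HU HY u; set F := sub_adj _.
have Fs : connect_sym F by apply: sym_connect_sym; exact: sub_adj_sym.
case: (boolP [exists w, connect F u w && (w \notin codom Y)]).
  by move=> /existsP[w /andP[]]; exists w.
move=> /existsPn Hall; exfalso.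
pose x : 'cV[K]_r := \col_j (connect F u (Y j))%:R.
have Hext : forall w, extv Y x w = (connect F u w)%:R.
  move=> w; case: (boolP (w \in codom Y)) => [/codomP[j ->]|Hw].
    by rewrite extv_in // mxE.
  by rewrite extv_out //; move: (Hall w); rewrite Hw andbT => /negbTE ->.
have Hx0 : rel_bd K X Y *m x = 0.
  apply/matrixP => i k; rewrite (ord1 k) rel_bd_mul !Hext mxE.
  have : F (X i).1 (X i).2 by rewrite /F /sub_adj -surjective_pairing imset_f.
  move=> /connect1 H1.
  have -> : connect F u (X i).2 = connect F u (X i).1.
    apply/idP/idP => H; apply: connect_trans H _ => //; by rewrite Fs.
  by rewrite subrr.
have : x = 0 by rewrite -(mulKmx HU x) Hx0 mulmx0.
have [j Hj] : exists j, Y j = u.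
  by move: (Hall u); rewrite connect0 /= negbK => /codomP[j ->]; exists j.
by move/matrixP => /(_ j 0); rewrite !mxE Hj connect0 => /eqP; rewrite oner_eq0.
Qed.

Lemma claimB (K : fieldType) n r (X : 'I_r -> 'I_n * 'I_n) (Y : 'I_r -> 'I_n) :
  rel_bd K X Y \in unitmx -> injective Y ->
  forall y1 y2, y1 \notin codom Y -> y2 \notin codom Y ->
  connect (sub_adj [set X i | i : 'I_r]) y1 y2 -> y1 = y2.
Proof.
move=> HU HY y1 y2 H1 H2 Hc; apply/eqP; apply/negPn/negP => Hne.
pose h (w : 'I_n) : K := (w == y2)%:R.
have [x Hx] := solve_bd (fun i => - (h (X i).2 - h (X i).1)) HU.
pose g w := extv Y x w + h w.
have Hg : forall u w, sub_adj [set X i | i : 'I_r] u w -> g u = g w.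
  have Hge : forall i, g (X i).1 = g (X i).2.
    move=> i; have E := Hx i.
    have E' : extv Y x (X i).2 = extv Y x (X i).1 - (h (X i).2 - h (X i).1).
      by rewrite -E addrC subrK.
    rewrite /g E'; ring.
  by move=> u w /sub_adj_imset [i [E|E]]; have := Hge i; rewrite E.
have := connect_const Hg Hc; rewrite /g !extv_out // /h eqxx (negbTE Hne) !add0r.
by move/eqP; rewrite eq_sym oner_eq0.
Qed.

Lemma claimC (K : fieldType) n r (X : 'I_r -> 'I_n * 'I_n) (Y : 'I_r -> 'I_n) :
  rel_bd K X Y \in unitmx -> acyclic_graph [set X i | i : 'I_r].
Proof.
move=> HU [c /and3P[Hcy Hu Hs]].
case: c Hcy Hu Hs => [|c0 [|c1 rest]] //=.
case: rest => [|y ys] //= ; set F := sub_adj _.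
rewrite rcons_path => /andP[Hc01 /andP[Hp0 /andP[Hp2 Hl]]] Hu _.
have Hp : path F c1 (y :: ys) by rewrite /= Hp0 Hp2.
move: Hu; rewrite !inE !negb_or => /andP[/and3P[/negP n01 n0y n0ys] /andP[/andP[n1y n1ys] _]].
have [i0 Hi0] := sub_adj_imset Hc01.
have [x Hx] := solve_bd (fun i => (i == i0)%:R) HU.
pose g := extv Y x.
have Hedge : forall u w, F u w -> (u \notin [:: c0; c1]) || (w \notin [:: c0; c1]) ->
    g u = g w.
  move=> u w /sub_adj_imset [i Hi] Hn.
  have Hii : i != i0.
    apply/eqP => E; subst i; move: Hn; rewrite !inE.
    by case: Hi0 => E0; case: Hi; rewrite E0 => -[E1 E2]; subst; rewrite !eqxx ?orbT.
  have := Hx i; rewrite (negbTE Hii) => /eqP; rewrite subr_eq0 => /eqP.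
  by case: Hi => ->.
have Hpath : forall x0 p, path F x0 p -> all (fun v => v \notin [:: c0; c1]) p ->
    g x0 = g (last x0 p).
  move=> x0 p; elim: p x0 => //= v p IH x0 /andP[Hxv Hp'] /andP[Hv Ha].
  rewrite (Hedge _ _ Hxv) ?Hv ?orbT //; exact: IH.
have Hall : all (fun v => v \notin [:: c0; c1]) (y :: ys).
  apply/allP => v Hv; rewrite !inE negb_or; apply/andP; split; apply/negP => /eqP E;
  subst v; move: Hv; rewrite inE => /orP[/eqP E|H].
  - by rewrite E eqxx in n0y.
  - by rewrite H in n0ys.
  - by rewrite E eqxx in n1y.
  - by rewrite H in n1ys.
have E1 := Hpath _ _ Hp Hall.
have Hlast : last y ys \notin [:: c0; c1].
  by move/allP: Hall; apply; exact: mem_last.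
have E2 := Hedge _ _ Hl; rewrite Hlast /= in E2.
have E3 : g c1 = g c0 by rewrite E1 E2.
have := Hx i0; rewrite eqxx; case: Hi0 => -> /=; rewrite /g in E3;
  rewrite E3 subrr => /eqP; by rewrite eq_sym oner_eq0.
Qed.
Lemma partA (K : fieldType) n (adj : rel 'I_n) r s
  (X : 'I_r -> 'I_n * 'I_n) (Y : 'I_r -> 'I_n) :
  (r + s)%N = n -> one_acyclic K adj X Y ->
  exists vs : 'I_s -> 'I_n,
    rooted_spanning_forest adj s [set X i | i : 'I_r] vs /\
    (forall u : 'I_n, (u \notin codom Y) = (u \in codom vs)).
Proof.
move=> Hn [HX Hedge HY Hker Hsurj].
have HU := rel_bd_unit Hsurj.
set Es := [set X i | i : 'I_r]; set F := sub_adj Es.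
have Fs : connect_sym F by apply: sym_connect_sym; exact: sub_adj_sym.
set Yc := [set u | u \notin codom Y].
have HcardY : #|Yc| = s.
  have -> : #|Yc| = #|[predC codom Y]| by apply: eq_card => u; rewrite !inE.
  have := cardC (mem (codom Y)); rewrite card_codom // !card_ord => H.
  by apply/eqP; rewrite -(eqn_add2l r) H Hn.
pose vs (i : 'I_s) : 'I_n := enum_val (cast_ord (esym HcardY) i).
have Hvs_inj : injective vs.
  by move=> i j /enum_val_inj /cast_ord_inj.
have Hcod : forall u, (u \in codom vs) = (u \in Yc).
  move=> u; apply/codomP/idP => [[i ->]|Hu]; first exact: enum_valP.
  exists (cast_ord HcardY (enum_rank_in Hu u)).
  by rewrite /vs cast_ordK enum_rankK_in.
have HvsY : forall i, vs i \notin codom Y.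
  by move=> i; have := enum_valP (cast_ord (esym HcardY) i); rewrite inE.
exists vs; split; last by move=> u; rewrite Hcod inE.
split.
  split.
  - by move=> x /imsetP[i _ ->]; apply: Hedge.
  - exact: claimC HU.
  - rewrite -HcardY -(@card_in_imset _ _ (fingraph.root F) Yc).
      apply: eq_card => x; rewrite !inE /=; apply/idP/idP.
        rewrite andbT => Hx; have [w Hw Hwn] := claimA HU HY x.
        rewrite -(eqP Hx); have -> : fingraph.root F x = fingraph.root F w by apply/(fingraph.rootP Fs).
        by apply: imset_f; rewrite inE.
      by move=> /imsetP[w _ ->]; rewrite andbT; exact: fingraph.roots_root.
    move=> u w Hu Hw /(fingraph.rootP Fs) Hc.
    by apply: (claimB HU HY) Hc; [move: Hu | move: Hw]; rewrite inE.
move=> i j Hc; apply: Hvs_inj; exact: (claimB HU HY (HvsY i) (HvsY j) Hc).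
Qed.
Lemma connect_rel (T : finType) (e : rel T) (R : rel T) :
  (forall u w, e u w -> R u w) -> reflexive R -> transitive R ->
  forall x y, connect e x y -> R x y.
Proof.
move=> He Hr Ht x y /connectP [p Hp ->]; elim: p x Hp => //= v p IH x /andP[exv Hp].
by apply: (Ht v); [apply: He | apply: IH].
Qed.

Lemma sub_adj_conn n (Es : {set 'I_n * 'I_n}) : connect_sym (sub_adj Es).
Proof. apply: sym_connect_sym; exact: sub_adj_sym. Qed.

Lemma connect_setD1 n (Es : {set 'I_n * 'I_n}) e x y :
  connect (sub_adj (Es :\ e)) x y -> connect (sub_adj Es) x y.
Proof.
apply: connect_sub => u w H; apply: connect1; move: H; rewrite /sub_adj !in_setD1.
by case/orP => /andP[_ ->]; rewrite ?orbT.
Qed.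

Lemma roots_cover n (adj : rel 'I_n) s Es (vs : 'I_s -> 'I_n) :
  rooted_spanning_forest adj s Es vs ->
  forall x, exists i, connect (sub_adj Es) x (vs i).
Proof.
move=> [[_ _ Hcomp] Hdist] x; set F := sub_adj Es.
have Fs : connect_sym F by apply: sub_adj_conn.
set R := [set y | roots F y].
set I := [set fingraph.root F (vs i) | i : 'I_s].
have HR : #|R| = s.
  rewrite -Hcomp; apply: eq_card => y; by rewrite !inE andbT.
have HI : #|I| = s.
  rewrite card_imset ?card_ord // => i j /(fingraph.rootP Fs) H; exact: Hdist.
have HIR : I =i R.
  apply/subset_cardP; first by rewrite HI HR.
  by apply/subsetP => y /imsetP[i _ ->]; rewrite inE; apply: fingraph.roots_root.
have : fingraph.root F x \in I by rewrite HIR inE fingraph.roots_root.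
move=> /imsetP[i _ Hi]; exists i; exact/(fingraph.rootP Fs).
Qed.

Lemma merge_conn n (Es : {set 'I_n * 'I_n}) (e : 'I_n * 'I_n) x y :
  e \in Es -> connect (sub_adj Es) x y ->
  connect (sub_adj (Es :\ e)) x y \/
  ((connect (sub_adj (Es :\ e)) x e.1 || connect (sub_adj (Es :\ e)) x e.2) &&
   (connect (sub_adj (Es :\ e)) y e.1 || connect (sub_adj (Es :\ e)) y e.2)).
Proof.
move=> He Hxy; set F' := sub_adj (Es :\ e).
have Fs : connect_sym F' by apply: sub_adj_conn.
pose C z := connect F' z e.1 || connect F' z e.2.
have HC : forall u w, connect F' u w -> C u = C w.
  by move=> u w Huw; rewrite /C !(same_connect Fs Huw).
pose M := [rel u w | connect F' u w || (C u && C w)].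
suff : M x y by case/orP; [left | right].
apply: (@connect_rel _ (sub_adj Es) M _ _ _ _ _ Hxy).
- move=> u w; rewrite /sub_adj /M /= => H.
  have [E1|N1] := eqVneq (u, w) e.
    by rewrite /C -E1 /= !connect0 ?orbT.
  have [E2|N2] := eqVneq (w, u) e.
    by rewrite /C -E2 /= !connect0 ?orbT.
  by rewrite connect1 // /F' /sub_adj !in_setD1 N1 N2.
- by move=> u; rewrite /M /= connect0.
- move=> w u z; rewrite /M /= => /orP[H1|/andP[H1 H2]] /orP[H3|/andP[H3 H4]].
  + by rewrite (connect_trans H1 H3).
  + by rewrite (HC _ _ H1) H3 H4 orbT.
  + by rewrite H1 -(HC _ _ H3) H2 orbT.
  + by rewrite H1 H4 orbT.
Qed.
Definition rep (K : fieldType) (x : {fraction {poly K}}) (P : {poly K}) :=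
  exists (k : nat) (b : bool),
    x = (-1) ^+ b * (tofrac P / tofrac ('X^k : {poly K})).

Lemma tofracX_neq0 (K : fieldType) k : tofrac ('X^k : {poly K}) != 0.
Proof. by rewrite tofrac_eq0 expf_neq0 // polyX_eq0. Qed.

Lemma aux_inv (F : fieldType) (T : F) : T != 0 -> T^-1 - 1 = (-1) ^+ true * ((T - 1) / T).
Proof. by move=> HT; field. Qed.

Lemma aux_uniq (F : fieldType) (p q t1 t2 s1 s2 : F) : t1 != 0 -> t2 != 0 ->
  p / t1 = s1 * (s2 * (q / t2)) -> p * t2 = s1 * s2 * q * t1.
Proof. by move=> H1 H2 E; rewrite -(divfK H1 p) E; field. Qed.

Lemma rep_mul (K : fieldType) x y (P Q : {poly K}) :
  rep x P -> rep y Q -> rep (x * y) (P * Q).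
Proof.
move=> [k1 [b1 ->]] [k2 [b2 ->]]; exists (k1 + k2)%N, (b1 (+) b2).
rewrite signr_addb !tofracM exprD tofracM invfM; ring.
Qed.

Lemma rep_frac (K : fieldType) (p : {poly K}) k :
  rep (tofrac p / tofrac ('X^k : {poly K})) p.
Proof. by exists k, false; rewrite mul1r. Qed.

Lemma tL_exp (K : fieldType) k : tL K ^+ k = tofrac ('X^k : {poly K}).
Proof. by rewrite /tL tofracXn. Qed.

Lemma rep_z (K : fieldType) (m : int) :
  rep (tL K ^ m - 1) ('X^(absz m) - 1).
Proof.
case: m => k.
  exists 0%N, false; rewrite expr0 tofrac1 invr1 mulr1 mul1r tofracB tofrac1.
  by rewrite -tL_exp.
exists k.+1, true; rewrite /= tofracB tofrac1 -tL_exp.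
have : tL K ^+ k.+1 != 0 by rewrite tL_exp tofracX_neq0.
move=> Hnz; rewrite (_ : tL K ^ Negz k = (tL K ^+ k.+1)^-1) //.
exact: aux_inv.
Qed.

Lemma aux_pow (F : fieldType) (T : F) a j : T != 0 -> (j <= a)%N ->
  T^-1 ^+ (a - j) = T ^+ j / T ^+ a.
Proof.
move=> HT Hj; rewrite -[in RHS](subnK Hj) exprD invfM exprVn mulrCA mulfV ?mulr1 //.
exact: expf_neq0.
Qed.

Lemma rep_q (K : fieldType) (l : nat) (M : int) :
  rep (qn l (tL K ^ M)) (\sum_(j < l) 'X^(j * absz M)).
Proof.
rewrite /qn; case: M => N.
  exists 0%N, false; rewrite expr0 tofrac1 invr1 mulr1 mul1r rmorph_sum /=.
  by apply: eq_bigr => j _; rewrite -exprM mulnC tL_exp.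
exists (l.-1 * N.+1)%N, false; rewrite mul1r rmorph_sum /= mulr_suml.
rewrite (_ : tL K ^ Negz N = (tL K ^+ N.+1)^-1) //.
have HT : tL K ^+ N.+1 != 0 by rewrite tL_exp tofracX_neq0.
rewrite (reindex_inj rev_ord_inj) /=; apply: eq_bigr => j _.
rewrite -!tL_exp ![(_ * N.+1)%N]mulnC !exprM.
move: (tL K ^+ N.+1) HT => T HT.
have Hj : (j <= l.-1)%N by rewrite -ltnS prednK ?ltn_ord // (leq_ltn_trans _ (ltn_ord j)).
rewrite (_ : (l - j.+1)%N = (l.-1 - j)%N); last by rewrite -add1n subnDA subn1.
exact: aux_pow.
Qed.

Lemma rep_uniq (K : fieldType) x (P Q : {poly K}) :
  rep x P -> rep x Q -> exists k1 k2 (b : bool), P * 'X^k1 = (-1) ^+ b * Q * 'X^k2.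
Proof.
move=> [k1 [b1 E1]] [k2 [b2 E2]]; exists k2, k1, (b1 (+) b2).
apply/eqP; rewrite -tofrac_eq !tofracM rmorph_sign signr_addb.
have H1 := tofracX_neq0 K k1; have H2 := tofracX_neq0 K k2.
have E : tofrac P / tofrac 'X^k1 = (-1) ^+ b1 * ((-1) ^+ b2 * (tofrac Q / tofrac 'X^k2)).
  by rewrite -E2 E1 signrMK.
move: E; move: (tofrac P) (tofrac Q) (tofrac ('X^k1 : {poly K})) (tofrac ('X^k2 : {poly K})) H1 H2.
move=> p q t1 t2 Ht1 Ht2 E.
by rewrite (aux_uniq Ht1 Ht2 E).
Qed.
Lemma mup0 (L : fieldType) (z : L) : mup z 0 = 0%N.
Proof.
rewrite /mup; set i := (X in nat_of_ord X).
by case: i => [[|j]] //=; rewrite size_poly0.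
Qed.

Lemma root_Xn (L : fieldType) (z : L) k : z != 0 -> ~~ root 'X^k z.
Proof. by move=> Hz; rewrite rootE hornerXn expf_eq0 (negbTE Hz) andbF. Qed.

Lemma Xn1_neq0 (L : fieldType) k : (0 < k)%N -> ('X^k - 1 : {poly L}) != 0.
Proof.
move=> Hk; apply/eqP => /(congr1 (fun p => p.[0])).
rewrite !hornerE expr0n gtn_eqF //= sub0r => /eqP.
by rewrite oppr_eq0 oner_eq0.
Qed.

Lemma mup_Xn1_le1 (L : fieldType) (HL : forall k, (k%:R == 0 :> L) = (k == 0)%N)
  (z : L) k : z != 0 -> (0 < k)%N -> (mup z ('X^k - 1) <= 1)%N.
Proof.
move=> Hz Hk; rewrite mup_leq ?Xn1_neq0 //; apply/negP => /dvdpP [q Hq].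
rewrite expr2 mulrA in Hq.
have := congr1 (fun p => (deriv p).[z]) Hq => /=.
rewrite derivB derivXn derivC subr0 derivM derivXsubC mulr1.
rewrite !hornerE subrr !mulr0 addr0 hornerMn hornerXn.
rewrite -mulr_natl => /eqP; rewrite mulf_eq0 HL gtn_eqF //= expf_eq0 (negbTE Hz) andbF.
by [].
Qed.
Lemma mup_Xn1_0 (L : fieldType) (z : L) k : z ^+ k != 1 -> mup z ('X^k - 1) = 0%N.
Proof.
by move=> H; apply: mupNroot; rewrite rootE !hornerE subr_eq0.
Qed.

Definition Qs (L : fieldType) (l N : nat) : {poly L} := \sum_(j < l) 'X^(j * N).

Lemma Qs_horner (L : fieldType) (l N : nat) (z : L) :
  (Qs L l N).[z] = \sum_(j < l) (z ^+ N) ^+ j.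
Proof.
rewrite /Qs horner_sum; apply: eq_bigr => j _; by rewrite !hornerE -exprM mulnC.
Qed.

Lemma Qs_mul (L : fieldType) (l N : nat) :
  Qs L l N * ('X^N - 1) = 'X^(l * N) - 1.
Proof.
rewrite /Qs mulr_suml.
rewrite (eq_bigr (fun j : 'I_l => 'X^(j.+1 * N) - 'X^(j * N))); last first.
  by move=> j _; rewrite mulrBr mulr1 -exprD mulSn addnC.
rewrite -(big_mkord xpredT (fun j => 'X^(j.+1 * N) - 'X^(j * N))) /=.
by rewrite telescope_sumr // mul0n expr0.
Qed.
Lemma Qs_root1 (L : fieldType) (HL : forall k, (k%:R == 0 :> L) = (k == 0)%N)
  (l N : nat) (z : L) : (0 < l)%N -> z ^+ N = 1 -> mup z (Qs L l N) = 0%N.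
Proof.
move=> Hl HN; apply: mupNroot; rewrite rootE Qs_horner HN.
rewrite (eq_bigr (fun _ => 1)) ?sumr_const ?card_ord; last by move=> j _; rewrite expr1n.
by rewrite HL -lt0n Hl.
Qed.

Lemma Qs_le1 (L : fieldType) (HL : forall k, (k%:R == 0 :> L) = (k == 0)%N)
  (l N : nat) (z : L) : z != 0 -> (0 < l)%N -> (mup z (Qs L l N) <= 1)%N.
Proof.
move=> Hz Hl; case: (posnP N) => [->|HN]; first by rewrite Qs_root1 ?expr0.
have H := Qs_mul L l N.
have Hnz : Qs L l N * ('X^N - 1) != 0 by rewrite H Xn1_neq0 // muln_gt0 Hl.
have Hpos : (0 < l * N)%N by rewrite muln_gt0 Hl.
move: Hnz; rewrite mulf_eq0 negb_or => /andP[Hq1 Hq2].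
have := mup_Xn1_le1 HL Hz Hpos; rewrite -H mupM // => H2.
by apply: leq_trans H2; apply: leq_addr.
Qed.

Lemma exprz_eq1 (L : fieldType) (z : L) (m : int) :
  (z ^ m == 1) = (z ^+ absz m == 1).
Proof.
case: m => k //=.
by rewrite (_ : z ^ Negz k = (z ^+ k.+1)^-1) // invr_eq1.
Qed.

Lemma mup_three (L : fieldType) (HL : forall k, (k%:R == 0 :> L) = (k == 0)%N)
  (z : L) (ma mb : int) (l : nat) :
  z != 0 -> ma != 0 -> mb != 0 -> (0 < l)%N ->
  (mup z ('X^(absz ma) - 1) + mup z ('X^(absz mb) - 1)
     + mup z (Qs L l (absz (ma + mb)%R)) <= 2)%N.
Proof.
move=> Hz Ha Hb Hl.
have Ha' : (0 < absz ma)%N by rewrite absz_gt0.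
have Hb' : (0 < absz mb)%N by rewrite absz_gt0.
have A1 := mup_Xn1_le1 HL Hz Ha'; have B1 := mup_Xn1_le1 HL Hz Hb'.
have Q1 := Qs_le1 HL (absz (ma + mb)) Hz Hl.
case: (boolP (z ^+ absz ma == 1)) => Hza; last first.
  rewrite (mup_Xn1_0 Hza) add0n; apply: leq_trans (leq_add B1 Q1) _; done.
case: (boolP (z ^+ absz mb == 1)) => Hzb; last first.
  rewrite (mup_Xn1_0 Hzb) addn0; apply: leq_trans (leq_add A1 Q1) _; done.
rewrite Qs_root1 //; last first.
  apply/eqP; rewrite -exprz_eq1 expfzDr //.
  by move: Hza Hzb; rewrite -!exprz_eq1 => /eqP -> /eqP ->; rewrite mulr1.
by rewrite addn0; apply: leq_trans (leq_add A1 B1) _.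
Qed.
Lemma rep_sign (K : fieldType) y (Q : {poly K}) (b : bool) :
  rep y Q -> rep ((-1) ^+ b * y) Q.
Proof.
move=> [k [b1 ->]]; exists k, (b (+) b1); by rewrite signr_addb mulrA.
Qed.

Lemma map_Xn1 (K L : fieldType) (f : {rmorphism K -> L}) k :
  map_poly f ('X^k - 1) = 'X^k - 1.
Proof. by rewrite rmorphB /= map_polyXn rmorph1. Qed.

Lemma map_Qs (K L : fieldType) (f : {rmorphism K -> L}) l N :
  map_poly f (Qs K l N) = Qs L l N.
Proof. by rewrite /Qs rmorph_sum; apply: eq_bigr => j _; rewrite /= map_polyXn. Qed.

Lemma final_mup (K L : fieldType) (f : {rmorphism K -> L})
  (HL : forall k, (k%:R == 0 :> L) = (k == 0)%N) (zeta : L) (ma mb mv : int)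
  (l : nat) (p p' : {poly K}) (x x' : {fraction {poly K}}) :
  zeta != 0 -> ma != 0 -> mb != 0 -> mv != 0 -> (0 < l)%N ->
  rep x p -> rep x' p' ->
  (exists b : bool, (tL K ^ mv - 1) * x =
     (-1) ^+ b * ((tL K ^ ma - 1) * (tL K ^ mb - 1) * qn l (tL K ^ (ma + mb)) * x')) ->
  (mup zeta (map_poly f p) <= mup zeta (map_poly f p') + 2)%N.
Proof.
move=> Hz Ha Hb Hv Hl Hx Hx' [b E].
have R1 := rep_mul (rep_z K mv) Hx.
have R2 := rep_sign b (rep_mul (rep_mul (rep_mul (rep_z K ma) (rep_z K mb)) (rep_q K l (ma + mb))) Hx').
rewrite -E in R2.
have [k1 [k2 [b' Heq]]] := rep_uniq R1 R2.
have := congr1 (map_poly f) Heq; rewrite !rmorphM /= !map_polyXn rmorph_sign.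
rewrite !map_Xn1 -/(Qs K l _) map_Qs.
set gp := map_poly f p; set gp' := map_poly f p'.
move=> Heq'.
have [->|Hp0] := eqVneq gp 0; first by rewrite mup0.
have Hv' : (0 < absz mv)%N by rewrite absz_gt0.
have HP : ('X^(absz mv) - 1) * gp != 0 by rewrite mulf_neq0 // Xn1_neq0.
have HPX : ('X^(absz mv) - 1) * gp * 'X^k1 != 0 by rewrite mulf_neq0 // expf_neq0 // polyX_eq0.
have HQ := HPX; rewrite Heq' in HQ.
have := congr1 (mup zeta) Heq'.
rewrite mupMl ?root_Xn // mupM ?Xn1_neq0 //.
rewrite mupMl ?root_Xn // mupMr; last first.
  by case: (b'); rewrite rootE !hornerE ?oppr_eq0 oner_eq0.
have HQ' : ('X^(absz ma) - 1) * ('X^(absz mb) - 1) * Qs L l (absz (ma + mb)) * gp' != 0.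
  by apply/eqP => HQ0; move: HQ; rewrite HQ0 mulr0 mul0r eqxx.
move: HQ'; rewrite !mulf_eq0 !negb_or => /andP[/andP[/andP[Ha1 Hb1] Hq1] Hp1].
rewrite !mupM ?mulf_neq0 // => Hm.
have := mup_three HL (l := l) Hz Ha Hb Hl.
move: Hm; set A := mup zeta ('X^(absz mv) - 1); lia.
Qed.
Definition zz (K : fieldType) n (m : 'I_n -> int) (u : 'I_n) : {fraction {poly K}} :=
  tL K ^ (m u) - 1.

Lemma bd_split (K : fieldType) n (lab : 'I_n -> 'I_n -> nat) (m : 'I_n -> int)
  (e : 'I_n * 'I_n) u : e.1 != e.2 ->
  bd_entry K lab m e u =
    (u == e.2)%:R * (zz K m e.1 * qn (lab e.1 e.2) (tL K ^ (m e.1 + m e.2)))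
  - (u == e.1)%:R * (zz K m e.2 * qn (lab e.1 e.2) (tL K ^ (m e.1 + m e.2))).
Proof.
move=> He; rewrite /bd_entry /zz.
case: eqP => [->|H2]; first by rewrite eq_sym (negbTE He) mul1r mul0r subr0.
by case: (u == e.1); rewrite /= ?mulr0n ?mulr1n ?mul0r ?mul1r ?sub0r ?subr0 ?oppr0.
Qed.

Lemma sum_pred1 (T : finType) (R : nzRingType) (P : pred T) (a : T) (F : T -> R) :
  \sum_(u | P u) (u == a)%:R * F u = if P a then F a else 0.
Proof.
rewrite big_mkcond /= (bigD1 a) //= eqxx mul1r big1 ?addr0.
  by case: (P a).
by move=> u Hu; rewrite (negbTE Hu) mul0r; case: (P u).
Qed.

Lemma bd_kernel (K : fieldType) n (lab : 'I_n -> 'I_n -> nat) (m : 'I_n -> int)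
  (e : 'I_n * 'I_n) (P : pred 'I_n) : e.1 != e.2 -> P e.1 = P e.2 ->
  \sum_(u | P u) bd_entry K lab m e u * zz K m u = 0.
Proof.
move=> He HP.
under eq_bigr do rewrite bd_split // mulrBl -!mulrA.
rewrite sumrB !sum_pred1 HP.
case: (P e.2); last by rewrite subrr.
by move: (zz K m e.1) (zz K m e.2) (qn _ _) => a b c; ring.
Qed.
Definition Amx (K : fieldType) n (lab : 'I_n -> 'I_n -> nat) (m : 'I_n -> int) k
  (Xl : 'I_k -> 'I_n * 'I_n) (Yl : 'I_k -> 'I_n) : 'M[{fraction {poly K}}]_k :=
  \matrix_(i < k, j < k) bd_entry K lab m (Xl i) (Yl j).

Lemma det_ker0 (F : fieldType) k (A : 'M[F]_k) (x : 'cV[F]_k) :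
  A *m x = 0 -> x != 0 -> \det A = 0.
Proof.
move=> Hx Hnz; apply/eqP; apply: contraR Hnz => Hd.
have HU : A \in unitmx by rewrite unitmxE unitfE.
by rewrite -(mulKmx HU x) Hx mulmx0.
Qed.

Lemma zz_neq0 (K : fieldType) n (m : 'I_n -> int) u : m u != 0 -> zz K m u != 0.
Proof.
move=> H; have [k [b E]] := rep_z K (m u); rewrite /zz E.
rewrite mulf_eq0 signr_eq0 /= mulf_eq0 invr_eq0 tofrac_eq0.
by rewrite (negbTE (tofracX_neq0 _ _)) orbF Xn1_neq0 // absz_gt0.
Qed.

Lemma sum_codom (R : nmodType) n k (Yl : 'I_k -> 'I_n) (G : 'I_n -> R) :
  injective Yl -> (forall u, u \notin codom Yl -> G u = 0) ->
  \sum_j G (Yl j) = \sum_u G u.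
Proof.
move=> HY HG.
rewrite (bigID (mem (Yl @: [set: 'I_k]))) /= [X in _ = _ + X]big1 ?addr0; last first.
  move=> u Hu; apply: HG; apply: contra Hu => /codomP[j ->].
  by apply: imset_f; rewrite inE.
rewrite big_imset /=; last by move=> i j _ _; apply: HY.
by apply: eq_bigl => j; rewrite inE.
Qed.

Lemma det_sing (K : fieldType) n (lab : 'I_n -> 'I_n -> nat) (m : 'I_n -> int) k
  (Xl : 'I_k -> 'I_n * 'I_n) (Yl : 'I_k -> 'I_n) (C : {set 'I_n}) w :
  (forall v, m v != 0) -> (forall i, (Xl i).1 != (Xl i).2) -> injective Yl ->
  w \in C -> {subset C <= codom Yl} ->
  (forall i, ((Xl i).1 \in C) = ((Xl i).2 \in C)) ->
  \det (Amx K lab m Xl Yl) = 0.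
Proof.
move=> Hm HX HY Hw HC Hcl.
pose x : 'cV_k := \col_j ((Yl j \in C)%:R * zz K m (Yl j)).
apply: (@det_ker0 _ _ _ x).
  apply/matrixP => i j0; rewrite (ord1 j0) !mxE.
  rewrite -[RHS](@bd_kernel K n lab m (Xl i) (mem C) (HX i) (Hcl i)).
  under eq_bigr do rewrite !mxE.
  rewrite (sum_codom (G := fun u => bd_entry K lab m (Xl i) u * ((u \in C)%:R * zz K m u))) //.
    rewrite [RHS]big_mkcond /=; apply: eq_bigr => u _.
    by case: (u \in C); rewrite /= ?mulr1n ?mulr0n ?mul1r ?mul0r ?mulr0.
  move=> u Hu; have : u \notin C by apply: contra Hu; apply: HC.
  by move/negbTE => ->; rewrite mul0r mulr0.
have [j Hj] : exists j, Yl j = w by have /codomP[j ->] := HC _ Hw; exists j.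
apply/eqP => /matrixP /(_ j 0); rewrite !mxE Hj Hw mul1r => /eqP.
by rewrite (negbTE (zz_neq0 K (Hm w))).
Qed.
Definition upd n k (Yl : 'I_k -> 'I_n) (j0 : 'I_k) (u : 'I_n) : 'I_k -> 'I_n :=
  fun j => if j == j0 then u else Yl j.

Lemma det_col_lin (K : fieldType) n (lab : 'I_n -> 'I_n -> nat) (m : 'I_n -> int) k
  (Xl : 'I_k -> 'I_n * 'I_n) (Yl : 'I_k -> 'I_n) j0 u :
  \det (Amx K lab m Xl (upd Yl j0 u)) =
  \sum_i bd_entry K lab m (Xl i) u * cofactor (Amx K lab m Xl Yl) i j0.
Proof.
rewrite (expand_det_col _ j0); apply: eq_bigr => i _; rewrite mxE /upd eqxx.
congr (_ * _); rewrite /cofactor; congr (_ * \det _).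
by apply/matrixP => a b; rewrite !mxE eq_sym (negbTE (neq_lift _ _)).
Qed.

Lemma det_repl0 (K : fieldType) n (lab : 'I_n -> 'I_n -> nat) (m : 'I_n -> int) k
  (Xl : 'I_k -> 'I_n * 'I_n) (Yl : 'I_k -> 'I_n) j0 :
  (forall i, (Xl i).1 != (Xl i).2) ->
  \sum_u zz K m u * \det (Amx K lab m Xl (upd Yl j0 u)) = 0.
Proof.
move=> HX.
under eq_bigr do rewrite det_col_lin mulr_sumr.
rewrite exchange_big /=; apply: big1 => i _.
under eq_bigr do rewrite mulrCA mulrA.
by rewrite -mulr_suml (@bd_kernel K n lab m (Xl i) xpredT (HX i) erefl) mul0r.
Qed.

Lemma det_eqcol (K : fieldType) n (lab : 'I_n -> 'I_n -> nat) (m : 'I_n -> int) k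
  (Xl : 'I_k -> 'I_n * 'I_n) (Yl : 'I_k -> 'I_n) j0 j1 :
  j0 != j1 -> Yl j0 = Yl j1 -> \det (Amx K lab m Xl Yl) = 0.
Proof.
move=> Hne HY; rewrite -det_tr; apply: (determinant_alternate Hne) => i.
by rewrite !mxE HY.
Qed.

Lemma det_repl (K : fieldType) n (lab : 'I_n -> 'I_n -> nat) (m : 'I_n -> int) k
  (Xl : 'I_k -> 'I_n * 'I_n) (Yl : 'I_k -> 'I_n) j0 :
  (forall i, (Xl i).1 != (Xl i).2) ->
  zz K m (Yl j0) * \det (Amx K lab m Xl Yl) =
  - \sum_(u | u \notin codom Yl) zz K m u * \det (Amx K lab m Xl (upd Yl j0 u)).
Proof.
move=> HX; have := @det_repl0 K n lab m k Xl Yl j0 HX.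
rewrite (bigID (mem (codom Yl))) /= (bigD1 (Yl j0)) ?codom_f //= big1; last first.
  move=> u /andP[/codomP[j1 ->] Hne].
  have Hj : j0 != j1 by apply: contra Hne => /eqP ->.
  rewrite (@det_eqcol K n lab m k Xl _ j0 j1) ?mulr0 //.
    by rewrite /upd eqxx eq_sym (negbTE Hj).
have -> : Amx K lab m Xl (upd Yl j0 (Yl j0)) = Amx K lab m Xl Yl.
  by apply/matrixP => a b; rewrite !mxE /upd; case: eqP => // ->.
by rewrite addr0 => /eqP; rewrite addr_eq0 => /eqP.
Qed.

Lemma det_reindex (R : comNzRingType) (T1 T2 : Type) k (G : T1 -> T2 -> R)
  (X1 X2 : 'I_k -> T1) (Y1 Y2 : 'I_k -> T2) :
  injective X2 -> injective Y2 ->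
  (forall i, exists j, X1 j = X2 i) -> (forall i, exists j, Y1 j = Y2 i) ->
  exists b : bool, \det (\matrix_(i, j) G (X2 i) (Y2 j)) =
     (-1) ^+ b * \det (\matrix_(i, j) G (X1 i) (Y1 j)).
Proof.
move=> HX2 HY2 /fin_all_exists [sg Hsg] /fin_all_exists [tg Htg].
have sg_inj : injective sg by move=> i j E; apply: HX2; rewrite -!Hsg E.
have tg_inj : injective tg by move=> i j E; apply: HY2; rewrite -!Htg E.
pose s := perm.perm sg_inj; pose t := perm.perm tg_inj.
have -> : \matrix_(i, j) G (X2 i) (Y2 j) =
          row_perm s (col_perm t (\matrix_(i, j) G (X1 i) (Y1 j))).
  by apply/matrixP => i j; rewrite !mxE !perm.permE Hsg Htg.
rewrite row_permE col_permE !det_mulmx !det_perm.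
by eexists; rewrite [_ * (-1) ^+ _]mulrC mulrA -signr_addb.
Qed.
Lemma ord_split s (i : 'I_s.+1) :
  i = ord_max \/ exists j : 'I_s, i = widen_ord (leqnSn s) j.
Proof.
case: (ltnP i s) => H; [right; exists (Ordinal H); exact: val_inj | left; apply: val_inj => /=].
by apply/eqP; rewrite eqn_leq H -ltnS ltn_ord.
Qed.

Lemma aux_comb (R : comNzRingType) (zv zp zc q D1 dM dM' : R) (b1 b2 : bool) :
  dM = (-1) ^+ b1 * (zp * q * D1) -> zc * dM' = (-1) ^+ b2 * (zv * D1) ->
  zv * dM = (-1) ^+ (b1 (+) b2) * (zp * zc * q * dM').
Proof.
move=> E1 E2; have E : zv * D1 = (-1) ^+ b2 * (zc * dM') by rewrite E2 signrMK.
rewrite E1 signr_addb.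
transitivity ((-1) ^+ b1 * (zp * q) * (zv * D1)); first by ring.
rewrite E; ring.
Qed.

Lemma aux_sgn (R : comNzRingType) (b : bool) (n : nat) (y D : R) :
  ((-1) ^+ b * y) * ((-1) ^+ n * D) = (-1) ^+ (b (+) odd n) * (y * D).
Proof. by rewrite signr_addb signr_odd mulrACA. Qed.

Lemma aux_neg (R : comNzRingType) (b : bool) (x y : R) :
  - (x * ((-1) ^+ b * y)) = (-1) ^+ (true (+) b) * (x * y).
Proof. by rewrite signr_addb expr1 mulN1r mulNr mulrCA. Qed.

Lemma ex_lift (T : eqType) k (Yl : 'I_k.+1 -> T) (jc : 'I_k.+1) u :
  u \in codom Yl -> u != Yl jc -> exists j, Yl (lift jc j) = u.
Proof.
case/codomP => j1 -> H; have Hj : jc != j1 by apply: contra H => /eqP ->.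
by have [j Ej _] := unlift_some Hj; exists j; rewrite -Ej.
Qed.

Lemma upd_inj n k (Yl : 'I_k -> 'I_n) j0 u :
  injective Yl -> u \notin codom Yl -> injective (upd Yl j0 u).
Proof.
move=> HY Hu a b; rewrite /upd; case: (a =P j0) => [->|Ha]; case: (b =P j0) => [->|Hb] //.
- by move=> E; move: Hu; rewrite E codom_f.
- by move=> E; move: Hu; rewrite -E codom_f.
- by move/HY.
Qed.
Lemma partB (n : nat) (adj : rel 'I_n) (lab : 'I_n -> 'I_n -> nat)
  (K : fieldType) (m : 'I_n -> int) (Hnres : non_resonant m)
  (s r r' : nat) (Hr : (r + s)%N = n) (Hr' : (r' + s.+1)%N = n)
  (Es : {set 'I_n * 'I_n}) (vs : 'I_s -> 'I_n) (e : 'I_n * 'I_n)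
  (vs' : 'I_s.+1 -> 'I_n)
  (Hrsf : rooted_spanning_forest adj s Es vs) (He : e \in Es)
  (Hvs' : forall i : 'I_s, vs' (widen_ord (leqnSn s) i) = vs i)
  (Hnew : forall i : 'I_s, ~~ connect (sub_adj (Es :\ e)) (vs' ord_max) (vs i))
  (X : 'I_r -> 'I_n * 'I_n) (Y : 'I_r -> 'I_n)
  (X' : 'I_r' -> 'I_n * 'I_n) (Y' : 'I_r' -> 'I_n)
  (HX : injective X) (HXi : [set X i | i : 'I_r] = Es) (HY : injective Y)
  (HYc : forall u, (u \in codom Y) = (u \notin codom vs))
  (HX' : injective X') (HXi' : [set X' i | i : 'I_r'] = Es :\ e)
  (HY' : injective Y') (HYc' : forall u, (u \in codom Y') = (u \notin codom vs')) :
  exists b : bool,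
    zz K m (vs' ord_max) * chi_minor K lab m X Y =
    (-1) ^+ b * (zz K m e.1 * zz K m e.2 * qn (lab e.1 e.2) (tL K ^ (m e.1 + m e.2))
                 * chi_minor K lab m X' Y').
Proof.
have Er : r = r'.+1 by move: Hr Hr'; lia.
subst r.
case: (Hrsf) => [[Hsub _ _] Hdist].
set F := sub_adj Es; set F' := sub_adj (Es :\ e); set v' := vs' ord_max.
have Fs : connect_sym F by apply: sub_adj_conn.
have F's : connect_sym F' by apply: sub_adj_conn.
have Hedge_e : e.1 != e.2 by have /andP[H _] := Hsub e He; rewrite neq_ltn H.
have HXE : forall i, X i \in Es by move=> i; rewrite -HXi imset_f.
have HXE' : forall i, X' i \in Es :\ e by move=> i; rewrite -HXi' imset_f.
have HXd : forall i, (X i).1 != (X i).2.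
  by move=> i; have /andP[H _] := Hsub _ (HXE i); rewrite neq_ltn H.
have HXd' : forall i, (X' i).1 != (X' i).2.
  move=> i; have := HXE' i; rewrite in_setD1 => /andP[_ /Hsub /andP[H _]].
  by rewrite neq_ltn H.
have Hvs'c : forall u, (u \in codom vs') = (u == v') || (u \in codom vs).
  move=> u; apply/codomP/orP => [[i ->]|[/eqP ->|/codomP[j ->]]].
  - by case: (ord_split i) => [->|[j ->]]; [left | right; rewrite Hvs' codom_f].
  - by exists ord_max.
  - by exists (widen_ord (leqnSn s) j); rewrite Hvs'.
have [ie Hie] : exists ie, X ie = e.
  by move: He; rewrite -HXi => /imsetP[i _ ->]; exists i.
have [i0 Hi0] := roots_cover Hrsf v'.
have [c [p [Hcp Hvc Hpr]]] : exists c p,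
    [/\ ((c == e.1) && (p == e.2)) || ((c == e.2) && (p == e.1)),
        connect F' v' c & connect F' p (vs i0)].
  case: (merge_conn He Hi0) => [H|/andP[H1 H2]]; first by move: (Hnew i0); rewrite H.
  move: H1 H2 => /orP[H1|H1] /orP[H2|H2].
  - by move: (Hnew i0); rewrite (connect_trans H1 (_ : connect F' e.1 (vs i0))) // F's.
  - by exists e.1, e.2; split; rewrite ?eqxx // F's.
  - by exists e.2, e.1; split; rewrite ?eqxx ?orbT // F's.
  - by move: (Hnew i0); rewrite (connect_trans H1 (_ : connect F' e.2 (vs i0))) // F's.
have Hnvp : ~~ connect F' v' p.
  by apply/negP => H; move: (Hnew i0); rewrite (connect_trans H Hpr).
have Hcnr : c \notin codom vs.
  by apply/codomP => -[i Ei]; move: (Hnew i); rewrite -Ei Hvc.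
have [jc Hjc] : exists jc, Y jc = c.
  have : c \in codom Y by rewrite HYc Hcnr.
  by case/codomP => j ->; exists j.
have Hv'nr : v' \notin codom vs.
  by apply/codomP => -[i Ei]; move: (Hnew i); rewrite -Ei connect0.
have Hv'Y : v' \in codom Y by rewrite HYc.
have Hv'Y' : v' \notin codom Y' by rewrite HYc' Hvs'c eqxx.
set q := qn (lab e.1 e.2) (tL K ^ (m e.1 + m e.2)).
set D1 := \det (Amx K lab m (fun i => X (lift ie i)) (fun k => Y (lift jc k))).
have [b1 EQ1] : exists b1 : bool,
    chi_minor K lab m X Y = (-1) ^+ b1 * (zz K m p * q * D1).
  have -> : chi_minor K lab m X Y = \det (Amx K lab m X Y) by [].
  rewrite (expand_det_row _ ie) (bigD1 jc) //= big1 ?addr0; last first.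
    move=> j Hj; rewrite mxE Hie.
    have HYj : Y j != c by rewrite -Hjc (inj_eq HY).
    case: (boolP ((Y j == e.1) || (Y j == e.2))) => Hab; last first.
      rewrite bd_split //; move: Hab; rewrite negb_or => /andP[/negbTE -> /negbTE ->].
      by rewrite /= !mul0r subr0 mul0r.
    have HYp : Y j = p.
      move: Hcp Hab HYj; case/orP => /andP[/eqP -> /eqP ->] /orP[] /eqP -> //;
        by rewrite eqxx.
    rewrite /cofactor.
    have -> : row' ie (col' j (Amx K lab m X Y)) =
              Amx K lab m (fun i => X (lift ie i)) (fun k => Y (lift j k)).
      by apply/matrixP => a b; rewrite !mxE.
    rewrite (@det_sing K n lab m r' _ _ [set w | connect F' v' w] v' Hnres) ?mulr0 //.
    - by move=> a b /HY /lift_inj.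
    - by rewrite inE connect0.
    - move=> w; rewrite inE => Hw.
      have Hwnr : w \notin codom vs.
        by apply/codomP => -[i Ei]; move: (Hnew i); rewrite -Ei Hw.
      have Hwp : w != Y j by rewrite HYp; apply: contra Hnvp => /eqP <-.
      have Hw' : w \in codom Y by rewrite HYc.
      have [k Ek] := ex_lift Hw' Hwp.
      by apply/codomP; exists k.
    - move=> i; rewrite !inE.
      have Hf : F' (X (lift ie i)).1 (X (lift ie i)).2.
        by rewrite /F' /sub_adj -surjective_pairing in_setD1 -Hie (inj_eq HX) lift_eqF HXE.
      exact: (same_connect1r F's Hf v').
  rewrite mxE Hie /cofactor.
  have -> : row' ie (col' jc (Amx K lab m X Y)) =
            Amx K lab m (fun i => X (lift ie i)) (fun k => Y (lift jc k)).
    by apply/matrixP => a b; rewrite !mxE.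
  have [bb Hbb] : exists bb : bool, bd_entry K lab m e c = (-1) ^+ bb * (zz K m p * q).
    case/orP: Hcp => /andP[/eqP -> /eqP ->]; [exists true | exists false];
      rewrite bd_split // eqxx ?(negbTE Hedge_e) ?(eq_sym e.2) ?(negbTE Hedge_e) /=;
      by rewrite ?mulr0n ?mulr1n ?mul0r ?mul1r ?sub0r ?subr0 ?expr1 ?expr0 ?mulN1r.
  by rewrite Hjc Hbb aux_sgn; eexists.
have HX1 : forall i, exists j, X (lift ie j) = X' i.
  move=> i; have := HXE' i; rewrite in_setD1 => /andP[Hne HinEs].
  have HinX : X' i \in codom X.
    by move: HinEs; rewrite -HXi => /imsetP[i1 _ ->]; apply: codom_f.
  by apply: ex_lift HinX _; rewrite Hie.
have HYgood : forall u, u \notin codom vs' -> u != c -> exists j, Y (lift jc j) = u.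
  move=> u Hu Huc; apply: ex_lift; last by rewrite Hjc.
  by move: Hu; rewrite HYc Hvs'c negb_or => /andP[].
have [b2 EQ2] : exists b2 : bool,
    zz K m c * chi_minor K lab m X' Y' = (-1) ^+ b2 * (zz K m v' * D1).
  have -> : chi_minor K lab m X' Y' = \det (Amx K lab m X' Y') by [].
  have [Ecv|Hcv] := eqVneq c v'.
    have HY1 : forall k, exists j, Y (lift jc j) = Y' k.
      move=> k; apply: HYgood; first by rewrite -HYc' codom_f.
      by apply/eqP => E; move: Hv'Y'; rewrite -Ecv -E codom_f.
    have [b Eb] := @det_reindex _ _ _ r' (bd_entry K lab m) (fun i => X (lift ie i)) X'
      (fun k => Y (lift jc k)) Y' HX' HY' HX1 HY1.
    exists b; rewrite /Amx Eb -/D1 -Ecv; exact: mulrCA.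
  have Hc' : c \in codom Y' by rewrite HYc' Hvs'c negb_or Hcv Hcnr.
  have [j0 Hj0] : exists j0, Y' j0 = c by case/codomP: Hc' => j0 ->; exists j0.
  have := @det_repl K n lab m r' X' Y' j0 HXd'.
  rewrite Hj0 => ->.
  rewrite (bigD1 v') //= big1 ?addr0; last first.
    move=> u /andP[Hu Huv].
    have : u \in codom vs by move: Hu; rewrite HYc' negbK Hvs'c (negbTE Huv).
    case/codomP => i ->.
    have Hvi : vs i \notin codom Y' by rewrite HYc' negbK Hvs'c codom_f orbT.
    rewrite (@det_sing K n lab m r' _ _ [set w | connect F' (vs i) w] (vs i) Hnres) ?mulr0 //.
    - exact: upd_inj.
    - by rewrite inE connect0.
    - move=> w; rewrite inE => Hw.
      have [->|Hwi] := eqVneq w (vs i); first by apply/codomP; exists j0; rewrite /upd eqxx.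
      have Hwv : w != v'.
        by apply/eqP => E; move: (Hnew i); rewrite -/v' -E F's Hw.
      have Hwnr : w \notin codom vs.
        apply/codomP => -[i' Ei']; move: Hwi; rewrite Ei'.
        by rewrite (Hdist i i') ?eqxx // (connect_setD1 (e := e)) // -Ei'.
      have : w \in codom Y' by rewrite HYc' Hvs'c negb_or Hwv Hwnr.
      case/codomP => j1 Ej1; apply/codomP; exists j1.
      rewrite /upd; case: eqP => // E; move: (Hnew i).
      by rewrite (connect_trans Hvc (_ : connect F' c (vs i))) // F's -Hj0 -E -Ej1.
    - move=> i1; rewrite !inE.
      have Hf : F' (X' i1).1 (X' i1).2.
        by rewrite /F' /sub_adj -surjective_pairing HXE'.
      exact: (same_connect1r F's Hf (vs i)).
  have HY2 : forall k, exists j, Y (lift jc j) = upd Y' j0 v' k.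
    move=> k; rewrite /upd; case: eqP => [_|Hk].
      by apply: ex_lift Hv'Y _; rewrite Hjc eq_sym.
    apply: HYgood; first by rewrite -HYc' codom_f.
    by rewrite -Hj0 (inj_eq HY'); apply/eqP.
  have [b Eb] := @det_reindex _ _ _ r' (bd_entry K lab m) (fun i => X (lift ie i)) X'
      (fun k => Y (lift jc k)) (upd Y' j0 v') HX' (@upd_inj n r' Y' j0 v' HY' Hv'Y') HX1 HY2.
  exists (true (+) b); rewrite /Amx Eb -/D1; exact: aux_neg.
have H := aux_comb EQ1 EQ2.
exists (b1 (+) b2); rewrite H.
by case/orP: Hcp => /andP[/eqP -> /eqP ->]; rewrite // [zz K m e.2 * _]mulrC.
Qed.
Lemma zeta_nz (L : fieldType) d (zeta : L) : (0 < d)%N ->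
  root (map_poly (fun z : int => z%:~R) 'Phi_d) zeta -> zeta != 0.
Proof.
move=> Hd Hr; apply/eqP => Hz; move: Hr; rewrite Hz rootE horner_coef0 coef_map /=.
have E := prod_Cyclotomic Hd.
rewrite (bigD1_seq d) ?divisors_uniq -?dvdn_divisors // in E.
have E0 := congr1 (fun p => p.[0]) E; rewrite /= hornerM !hornerE in E0.
rewrite expr0n gtn_eqF //= sub0r horner_coef0 in E0.
have E1 := congr1 (fun z : int => z%:~R : L) E0; rewrite /= intrM in E1.
move=> /eqP H0; move: E1; rewrite H0 mul0r mulrNz mulr1z => /eqP.
by rewrite eq_sym oppr_eq0 oner_eq0.
Qed.
Theorem lemma5p1 (n : nat) (adj : rel 'I_n) (lab : 'I_n -> 'I_n -> nat)
  (K : fieldType) (m : 'I_n -> int)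
  (Hgraph : simple_graph adj) (Hlab : even_labeling adj lab)
  (Hconn : connected_graph adj) (HFC : FC_type adj lab)
  (Hchar : [pchar K] =i pred0)
  (Hsurj : chi_surjective m) (Hnres : non_resonant m) :
  (* (a) *)
  (forall (r s : nat), (r + s)%N = n ->
   forall (X : 'I_r -> 'I_n * 'I_n) (Y : 'I_r -> 'I_n),
     one_acyclic K adj X Y ->
     exists vs : 'I_s -> 'I_n,
       rooted_spanning_forest adj s [set X i | i : 'I_r] vs /\
       (forall u : 'I_n, (u \notin codom Y) = (u \in codom vs)))
  /\
  (* (b) *)
  (forall (s r r' : nat), (r + s)%N = n -> (r' + s.+1)%N = n ->
   forall (Es : {set 'I_n * 'I_n}) (vs : 'I_s -> 'I_n)
          (e : 'I_n * 'I_n) (vs' : 'I_s.+1 -> 'I_n),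
     rooted_spanning_forest adj s Es vs ->
     e \in Es ->
     (forall i : 'I_s, vs' (widen_ord (leqnSn s) i) = vs i) ->
     (forall i : 'I_s, ~~ connect (sub_adj (Es :\ e)) (vs' ord_max) (vs i)) ->
   forall (X : 'I_r -> 'I_n * 'I_n) (Y : 'I_r -> 'I_n)
          (X' : 'I_r' -> 'I_n * 'I_n) (Y' : 'I_r' -> 'I_n),
     injective X -> [set X i | i : 'I_r] = Es ->
     injective Y -> (forall u, (u \in codom Y) = (u \notin codom vs)) ->
     injective X' -> [set X' i | i : 'I_r'] = Es :\ e ->
     injective Y' -> (forall u, (u \in codom Y') = (u \notin codom vs')) ->
   forall (d : nat), (0 < d)%N ->
   forall (L : fieldType) (f : {rmorphism K -> L}) (zeta : L),
     root (map_poly (fun z : int => z%:~R) 'Phi_d) zeta ->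
   forall (p p' : {poly K}) (k k' : nat),
     chi_minor K lab m X Y = tofrac p / tofrac ('X^k : {poly K}) ->
     chi_minor K lab m X' Y' = tofrac p' / tofrac ('X^k' : {poly K}) ->
     (mup zeta (map_poly f p) <= mup zeta (map_poly f p') + 2)%N).
Proof.
split.
  move=> r s Hn X Y H; exact: (partA Hn H).
move=> s r r' Hr Hr' Es vs e vs' Hrsf He Hvs' Hnew X Y X' Y' HX HXi HY HYc HX' HXi' HY' HYc'
  d Hd L f zeta Hroot p p' k k' Ep Ep'.
have [b E] := partB lab K Hnres Hr Hr' Hrsf He Hvs' Hnew HX HXi HY HYc
  HX' HXi' HY' HYc'.
have HK := (pcharf0P K).1 Hchar.
have HL : forall j, (j%:R == 0 :> L) = (j == 0)%N.
  by move=> j; rewrite -(rmorph_nat f) fmorph_eq0 HK.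
have Hl : (0 < lab e.1 e.2)%N.
  case: Hrsf => [[Hsub _ _] _]; have /andP[_ Hadj] := Hsub e He.
  by have [_ ->] := Hlab _ _ Hadj.
apply: (final_mup f HL (zeta_nz Hd Hroot) (Hnres e.1) (Hnres e.2) (Hnres (vs' ord_max)) Hl
  (x := chi_minor K lab m X Y) (x' := chi_minor K lab m X' Y')).
- rewrite Ep; exact: rep_frac.
- rewrite Ep'; exact: rep_frac.
- by exists b; exact: E.
Qed.
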